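(* Let $B$ be a finite skew brace with $(B,+)$ abelian such that $\Lambda(B)$ has exactly one vertex. Then $B$ is isomorphic to one of: (1) $\mathbb{Z}/4\mathbb{Z}$ with its usual addition and $x\circ y=x+y+2xy$; (2) $\mathbb{Z}/2\mathbb{Z}\times\mathbb{Z}/2\mathbb{Z}$ with componentwise addition and $(x_1,y_1)\circ(x_2,y_2)=(x_1+x_2+y_1y_2,\,y_1+y_2)$; (3) $\mathbb{Z}/2\mathbb{Z}\times\mathbb{Z}/4\mathbb{Z}$ with componentwise addition and $(x_1,y_1)\circ(x_2,y_2)=\big(x_1+x_2+\varepsilon(y_1)y_2,\,y_1+y_2+2y_1y_2\big)$, where $\varepsilon(y_1)=0$ if $y_1\in\{0,1\}$ and $\varepsilon(y_1)=1$ if $y_1\in\{2,3\}$ (i.e. $\varepsilon(y_1)=\sum_{i=1}^{y_1-1}i \bmod 2$ for the representative $y_1\in\{0,1,2,3\}$), and $\varepsilon(y_1)y_2$ is computed in $\mathbb{Z}/2\mathbb{Z}$.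
   Context: A skew brace is a triple $(A,+,\circ)$ where $(A,+)$ and $(A,\circ)$ are groups with $a\circ(b+c)=a\circ b-a+a\circ c$. $\lambda_a(b)=-a+a\circ b$ defines an action of $(A,\circ)$ on $(A,+)$ by automorphisms. $\Lambda(A)$ is the graph whose vertices are the $\lambda$-orbits of size $>1$, two distinct vertices $L_1,L_2$ adjacent iff $\gcd(|L_1|,|L_2|)\ne1$. *)

(* Defs.v *)
From HB Require Import structures.
From mathcomp Require Import all_boot all_algebra.
Set Implicit Arguments. Unset Strict Implicit. Unset Printing Implicit Defensive.
Import GRing.Theory.

Record skew_brace (T : finType) := SkewBrace {
  sb_add : T -> T -> T;
  sb_zero : T;
  sb_opp : T -> T;
  sb_circ : T -> T -> T;
  sb_one : T;
  sb_cinv : T -> T;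
  sb_addA : forall a b c, sb_add a (sb_add b c) = sb_add (sb_add a b) c;
  sb_add0r : forall a, sb_add sb_zero a = a;
  sb_addr0 : forall a, sb_add a sb_zero = a;
  sb_addNr : forall a, sb_add (sb_opp a) a = sb_zero;
  sb_addrN : forall a, sb_add a (sb_opp a) = sb_zero;
  sb_circA : forall a b c, sb_circ a (sb_circ b c) = sb_circ (sb_circ a b) c;
  sb_circ1r : forall a, sb_circ sb_one a = a;
  sb_circr1 : forall a, sb_circ a sb_one = a;
  sb_circVr : forall a, sb_circ (sb_cinv a) a = sb_one;
  sb_circrV : forall a, sb_circ a (sb_cinv a) = sb_one;
  sb_compat : forall a b c,
    sb_circ a (sb_add b c) = sb_add (sb_add (sb_circ a b) (sb_opp a)) (sb_circ a c)
}.

Definition additively_abelian (T : finType) (B : skew_brace T) :=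
  forall a b, sb_add B a b = sb_add B b a.

Definition sb_lambda (T : finType) (B : skew_brace T) (a b : T) : T :=
  sb_add B (sb_opp B a) (sb_circ B a b).

Definition lambda_orbit (T : finType) (B : skew_brace T) (b : T) : {set T} :=
  [set sb_lambda B a b | a in T].

Definition Lambda_vertices (T : finType) (B : skew_brace T) : {set {set T}} :=
  [set lambda_orbit B b | b in T & 1 < #|lambda_orbit B b|].

Definition brace_isomorphic (T : finType) (B : skew_brace T) (T' : Type)
    (addT circT : T' -> T' -> T') : Prop :=
  exists f : T -> T', bijective f /\
    (forall x y, f (sb_add B x y) = addT (f x) (f y)) /\
    (forall x y, f (sb_circ B x y) = circT (f x) (f y)).

Local Open Scope ring_scope.

Definition add1 (x y : 'Z_4) : 'Z_4 := x + y.
Definition circ1 (x y : 'Z_4) : 'Z_4 := x + y + 2%:R * x * y.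

Definition add2 (p q : 'Z_2 * 'Z_2) : 'Z_2 * 'Z_2 := (p.1 + q.1, p.2 + q.2).
Definition circ2 (p q : 'Z_2 * 'Z_2) : 'Z_2 * 'Z_2 :=
  (p.1 + q.1 + p.2 * q.2, p.2 + q.2).

Definition eps3 (y : 'Z_4) : 'Z_2 := (1 < (y : nat))%N%:R.
Definition red42 (y : 'Z_4) : 'Z_2 := (y : nat)%:R.
Definition add3 (p q : 'Z_2 * 'Z_4) : 'Z_2 * 'Z_4 := (p.1 + q.1, p.2 + q.2).
Definition circ3 (p q : 'Z_2 * 'Z_4) : 'Z_2 * 'Z_4 :=
  (p.1 + q.1 + eps3 p.2 * red42 q.2, p.2 + q.2 + 2%:R * p.2 * q.2).

(* Main.v *)
From HB Require Import structures.
Require Import Defs.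
From mathcomp Require Import all_boot all_algebra.
From mathcomp Require Import zify.
From Stdlib Require Import Lia.
Set Implicit Arguments. Unset Strict Implicit. Unset Printing Implicit Defensive.
Import GRing.Theory.
Local Open Scope ring_scope.
Lemma add4v (i j : 'Z_4) : nat_of_ord (i + j) = ((i + j) %% 4)%N. Proof. by []. Qed.
Lemma add2v (i j : 'Z_2) : nat_of_ord (i + j) = ((i + j) %% 2)%N. Proof. by []. Qed.
Lemma tab3 (j1 j2 : 'Z_4) :
  nat_of_ord (eps3 j1 * red42 j2) = (if odd j2 then nat_of_ord (eps3 j1) else 0%N) /\
  nat_of_ord (2%:R * j1 * j2 : 'Z_4) = (if odd j2 then nat_of_ord (2%:R * j1 : 'Z_4) else 0%N).
Proof. by case: j1 => [[|[|[|[|?]]]] ?]; case: j2 => [[|[|[|[|?]]]] ?]. Qed.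
Lemma tabg (j : 'Z_4) : (nat_of_ord (eps3 j), nat_of_ord (2%:R * j : 'Z_4)) =
  (if j == 0 :> nat then (0,0) else if j == 1 :> nat then (0,2) else if j == 2 :> nat then (1,0) else (1,2))%N.
Proof. by case: j => [[|[|[|[|?]]]] ?]. Qed.
Lemma tabg' (j : 'Z_4) : nat_of_ord (eps3 j) = (1 < j)%N /\
  nat_of_ord ((2%:R * j)%R : 'Z_4) = (if odd j then 2 else 0)%N.
Proof. by case: j => [[|[|[|[|?]]]] ?]. Qed.
Lemma tab2 (p2 q2 : 'Z_2) : nat_of_ord (p2 * q2) = (if odd q2 then nat_of_ord p2 else 0%N).
Proof. by case: p2 => [[|[|?]] ?]; case: q2 => [[|[|?]] ?]. Qed.
Lemma tab1 (p q : 'Z_4) : nat_of_ord (2%:R * p * q : 'Z_4) = (if odd q && odd p then 2 else 0)%N.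
Proof. by case: p => [[|[|[|[|?]]]] ?]; case: q => [[|[|[|[|?]]]] ?]. Qed.
Lemma wit : nat_of_ord (inZp 2 : 'Z_4) = 2%N /\ nat_of_ord (inZp 1 : 'Z_2) = 1%N. Proof. by []. Qed.

Section S.
Variables (T : finType) (B : skew_brace T).
Hypothesis abB : additively_abelian B.
Definition BT : Type := T.
HB.instance Definition _ := Finite.on BT.
HB.instance Definition _ := GRing.isZmodule.Build BT (@sb_addA _ B) abB (@sb_add0r _ B) (@sb_addNr _ B).

Definition c (a b : BT) : BT := sb_circ B a b.
Definition cinv (a : BT) : BT := sb_cinv B a.
Lemma circA a b d : c a (c b d) = c (c a b) d. Proof. exact: (sb_circA B). Qed.
Lemma circ1r a : c (sb_one B) a = a. Proof. exact: (sb_circ1r B). Qed.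
Lemma circVr a : c (cinv a) a = sb_one B. Proof. exact: (sb_circVr B). Qed.

Lemma circrV a : c a (cinv a) = sb_one B. Proof. exact: (sb_circrV B). Qed.
Definition lam (a b : BT) : BT := - a + c a b.

Lemma compat (a b d : BT) : c a (b + d) = c a b - a + c a d.
Proof. exact: (sb_compat B). Qed.

Lemma circr0 (a : BT) : c a 0 = a.
Proof.
have h := compat a 0 0; rewrite addr0 in h.
have := congr1 (fun z => z - c a 0) h; rewrite addrK subrr => /esym/eqP.
by rewrite subr_eq0 => /eqP.
Qed.

Lemma one0 : sb_one B = 0 :> BT.
Proof. by rewrite -[RHS]circ1r circr0. Qed.

Lemma circ0r (a : BT) : c 0 a = a.
Proof. by rewrite -one0 circ1r. Qed.

Lemma circK (a b : BT) : c a b = a + lam a b.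
Proof. by rewrite /lam addNKr. Qed.

Lemma lamD a b d : lam a (b + d) = lam a b + lam a d.
Proof. by rewrite /lam compat !addrA. Qed.

Lemma lam0 a : lam a 0 = 0.
Proof. by rewrite /lam circr0 addNr. Qed.

Lemma lamN a b : lam a (- b) = - lam a b.
Proof. by apply/eqP; rewrite -addr_eq0 -lamD addNr lam0. Qed.

Lemma lamB a b d : lam a (b - d) = lam a b - lam a d.
Proof. by rewrite lamD lamN. Qed.

Lemma lam_id b : lam 0 b = b.
Proof. by rewrite /lam circ0r oppr0 add0r. Qed.

Lemma lamM a b d : lam (c a b) d = lam a (lam b d).
Proof.
rewrite [lam b d]/lam lamD lamN /lam circA opprD opprK.
by rewrite addrA [a - _]addrC addrK.
Qed.

Lemma lamV a b : lam (cinv a) (lam a b) = b.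
Proof. by rewrite -lamM circVr one0 lam_id. Qed.

Lemma circI a : injective (c a).
Proof.
move=> u v h; have := congr1 (c (cinv a)) h.
by rewrite !circA circVr !circ1r.
Qed.
Definition g (x0 a : BT) : BT := lam a x0 - x0.

Record Str (F : {set BT}) (x0 : BT) : Prop := {
  F0 : 0 \in F;
  FD : forall u v, u \in F -> v \in F -> u + v \in F;
  FN : forall u, u \in F -> - u \in F;
  x0F : x0 \notin F;
  Fx0 : forall y, y \notin F -> y - x0 \in F;
  gF : forall a, g x0 a \in F;
  lamF : forall a y, y \in F -> lam a y = y;
  K2 : #|[set a | g x0 a == 0]| = 2;
  gsurj : forall f, f \in F -> exists a, g x0 a = f;
  x02 : x0 + x0 \in F;
  gnz : exists a, g x0 a != 0 }.

Lemma orbP (b y : BT) : reflect (exists a : BT, y = lam a b) (y \in lambda_orbit B b).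
Proof. by apply: (iffP imsetP) => [[a _ ->]|[a ->]]; exists a. Qed.

Lemma orb_self (b : BT) : b \in lambda_orbit B b.
Proof. by apply/orbP; exists 0; rewrite lam_id. Qed.

Lemma structure : #|Lambda_vertices B| = 1%N -> exists F x0, Str F x0.
Proof.
move=> /eqP /cards1P [V hV].
have : V \in Lambda_vertices B by rewrite hV set11.
case/imsetP => b0; rewrite inE => /andP [_ hb0] eV.
have big_orb (b : BT) : (1 < #|lambda_orbit B b|)%N -> lambda_orbit B b = V.
  move=> h; apply/set1P; rewrite -hV; apply/imsetP; exists b => //; by rewrite inE h andbT.
pose F : {set BT} := [set y : BT | [forall a : BT, lam a y == y]].
have notV_fixed (y : BT) : y \notin V -> y \in F.
  move=> yV; rewrite inE; apply/forallP => a.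
  case: (ltnP 1 #|lambda_orbit B y|) => h.
    by move: yV; rewrite -(big_orb y h) orb_self.
  move/card_le1_eqP: h => h; apply/eqP; apply: (h y (lam a y)).
    exact: orb_self.
  by apply/orbP; exists a.
have V_notfixed (y : BT) : y \in V -> y \notin F.
  rewrite eV => /orbP [d ->]; rewrite inE; apply/negP => /forallP hf.
  have e0 : b0 = lam d b0 by rewrite -{1}(lamV d b0) (eqP (hf _)).
  have : (#|lambda_orbit B b0| <= 1)%N.
    apply/card_le1_eqP => u v /orbP [a1 ->] /orbP [a2 ->].
    by rewrite e0 !(eqP (hf _)).
  by rewrite leqNgt hb0.
have FV (y : BT) : (y \in F) = (y \notin V).
  by apply/idP/idP => [h|/notV_fixed //]; apply/negP => /V_notfixed; rewrite h.
have lamF (a y : BT) : y \in F -> lam a y = y by rewrite inE => /forallP /(_ a) /eqP.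
have F0 : 0 \in F by rewrite inE; apply/forallP => a; rewrite lam0.
have FD (u v : BT) : u \in F -> v \in F -> u + v \in F.
  by move=> hu hv; rewrite inE; apply/forallP => a; rewrite lamD !lamF.
have FN (u : BT) : u \in F -> - u \in F.
  by move=> hu; rewrite inE; apply/forallP => a; rewrite lamN !lamF.
have [x0 x0V] : exists x0 : BT, x0 \in V.
  have : (0 < #|V|)%N by rewrite eV; exact: ltnW hb0.
  by rewrite card_gt0 => /set0Pn [y hy]; exists y.
have x0F : x0 \notin F by rewrite FV x0V.
have [a0 ha0] : exists a, lam a x0 != x0.
  apply/existsP; rewrite -negb_forall; apply: contra x0F => h; rewrite inE; exact: h.
have eVx : lambda_orbit B x0 = V.
  apply: big_orb.
  apply/card_gt1P; exists (lam a0 x0), x0; split => //; last exact: orb_self.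
  by apply/orbP; exists a0.
have x0fV (f : BT) : f \in F -> x0 + f \in V.
  move=> hf; rewrite -[_ \in V]negbK -FV; apply/negP => h.
  by move: x0F; rewrite -(addrK f x0) FD // FN.
pose W : {set BT} := [set y : BT | y \in V].
pose K := [set a : BT | lam a x0 == x0].
have fib (y : BT) : y \in W -> #|[set a : BT | lam a x0 == y]| = #|K|.
  rewrite inE -eVx => /orbP [d ->].
  rewrite -(card_imset K (@circI d)); apply: eq_card => a.
  rewrite inE; apply/eqP/imsetP => [h|[k]].
    exists (c (cinv d) a); last by rewrite circA circrV circ1r.
    by rewrite inE lamM h lamV.
  by rewrite inE => /eqP hk ->; rewrite lamM hk.
have cnt : #|[set: BT]| = (#|W| * #|K|)%N.
  rewrite -sum1_card (partition_big (fun a => lam a x0) (fun j : BT => j \in W)); last first.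
    by move=> a _; rewrite /= inE -eVx; apply/orbP; exists a.
  rewrite (eq_bigr (fun _ => #|K|)) ?sum_nat_const //; move=> y yV.
  by rewrite -(fib y yV) -sum1dep_card; apply: eq_bigl => a; rewrite inE.
have cC : (#|W| + #|F| = #|[set: BT]|)%N.
  have -> : F = ~: W by apply/setP => y; rewrite FV !inE.
  by rewrite cardsC cardsT.
have FleV : (#|F| <= #|W|)%N.
  rewrite -(card_imset _ (addrI x0)); apply: subset_leq_card.
  by apply/subsetP => y /imsetP [f hf ->]; rewrite inE; apply: x0fV.
have F1 : (0 < #|F|)%N by rewrite card_gt0; apply/set0Pn; exists 0.
have [K2 eFV] : #|K| = 2 /\ #|F| = #|W|.
  move: cnt; rewrite -cC => h.
  have V2 : (1 < #|W|)%N.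
    have : (1 < #|lambda_orbit B x0|)%N by rewrite eVx eV.
    case/card_gt1P => y1 [y2 [h1 h2 h12]]; apply/card_gt1P.
    by exists y1, y2; rewrite !inE -eVx h1 h2.
  move: h F1 FleV V2; set w := #|W|; set f := #|F|; set k := #|K| => h F1' FleV' V2'.
  case: k h => [|[|[|k]]] h.
  - rewrite muln0 in h; lia.
  - rewrite muln1 in h; lia.
  - split => //; lia.
  - have : (w * 3 <= w * k.+3)%N by rewrite leq_mul2l orbT.
    lia.
have imV : (fun f => x0 + f) @: F = W.
  apply/eqP; rewrite eqEcard (card_imset _ (addrI x0)) eFV leqnn andbT.
  by apply/subsetP => y /imsetP [f hf ->]; rewrite inE; apply: x0fV.
exists F, x0; split => //.
- move=> y; rewrite FV negbK => yV; have : y \in W by rewrite inE.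
  by rewrite -imV => /imsetP [f hf ->]; rewrite addrC addKr.
- move=> a; rewrite /g; have : lam a x0 \in W by rewrite inE -eVx; apply/orbP; exists a.
  by rewrite -imV => /imsetP [f hf ->]; rewrite addrC addKr.
- by rewrite -K2; apply: eq_card => a; rewrite !inE /g subr_eq0.
- move=> f hf; have : x0 + f \in lambda_orbit B x0 by rewrite eVx x0fV.
  by case/orbP => a ha; exists a; rewrite /g -ha addrC addKr.
- rewrite FV; apply/negP => h; have : x0 + x0 \in W by rewrite inE.
  rewrite -imV => /imsetP [f hf /addrI ef]; by move: x0F; rewrite ef hf.
- by exists a0; rewrite /g subr_eq0.
Qed.


Lemma iso_of (T' : finType) (addT circT : T' -> T' -> T') (psi : T' -> BT) :
  injective psi -> (forall y, exists p, psi p = y) ->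
  (forall p q, psi (addT p q) = psi p + psi q) ->
  (forall p q, psi (circT p q) = psi p + lam (psi p) (psi q)) ->
  brace_isomorphic B addT circT.
Proof.
move=> inj surj hA hC; have [p0 _] := surj 0.
pose phi (y : BT) := odflt p0 [pick p | psi p == y].
have psiK y : psi (phi y) = y.
  rewrite /phi; case: pickP => [p /eqP //|h].
  by have [p hp] := surj y; move: (h p); rewrite hp eqxx.
have phiK p : phi (psi p) = p by apply: inj; rewrite psiK.
exists phi; split; first by exists psi.
split => x y; apply: inj; first by rewrite hA !psiK.
by rewrite hC !psiK -circK.
Qed.

Lemma mulrn_mod (a : BT) n k : a *+ n = 0 -> a *+ (k %% n) = a *+ k.
Proof.
by move=> h; rewrite {2}(divn_eq k n) mulrnDr mulnC mulrnA h mul0rn add0r.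
Qed.

Section Cls.
Variables (F : {set BT}) (x0 : BT).
Hypothesis hS : Str F x0.
Local Notation gg := (g x0).

Lemma lamO a y : y \notin F -> lam a y = y + gg a.
Proof.
move=> yF; have h := Fx0 hS yF.
have -> : lam a y = lam a (y - x0) + lam a x0 by rewrite -lamD subrK.
by rewrite (lamF hS _ h) /g -addrA [- x0 + _]addrC.
Qed.

Lemma lamx0 a : lam a x0 = x0 + gg a.
Proof. by rewrite /g addrC subrK. Qed.

Lemma gM a b : gg (c a b) = gg a + gg b.
Proof.
have e : lam b x0 = x0 + gg b by apply: lamx0.
by rewrite /g lamM e lamD (lamF hS _ (gF hS b)) (addrC x0) addrK addrAC.
Qed.

Lemma g0 : gg 0 = 0.
Proof. by rewrite /g lam_id subrr. Qed.

Lemma ga2 a : gg a + gg a = 0.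
Proof.
have h := lamF hS a (x02 hS); rewrite lamD lamx0 addrACA in h.
by apply: (addrI (x0 + x0)); rewrite addr0.
Qed.

Lemma F2 f : f \in F -> f + f = 0.
Proof. by case/(gsurj hS) => a <-; exact: ga2. Qed.

Lemma gD a f : f \in F -> gg (a + f) = gg a + gg f.
Proof. by move=> hf; rewrite -gM circK (lamF hS _ hf). Qed.

Lemma ggF f : f \in F -> gg (gg f) = 0.
Proof.
move=> hf; have h := gM f x0.
have h1 : f + gg f \in F := FD hS hf (gF hS f).
rewrite circK lamx0 addrCA (gD _ h1) (gD _ (gF hS f)) in h.
by move: h; rewrite addrA [gg x0 + _]addrC -[RHS]addr0 => /addrI.
Qed.

Lemma memF_mulrn f n : f \in F -> f *+ n \in F.
Proof. by move=> hf; elim: n => [|n IH]; rewrite ?mulr0n ?(F0 hS) // mulrS (FD hS). Qed.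

Lemma notF_add f y : f \in F -> y \notin F -> f + y \notin F.
Proof.
move=> hf hy; apply: contra hy => h.
by have := FD hS h (FN hS hf); rewrite addrC addKr.
Qed.

Lemma gmulF f n : f \in F -> gg (f *+ n) = gg f *+ n.
Proof.
move=> hf; elim: n => [|n IH]; first by rewrite !mulr0n g0.
by rewrite !mulrSr gD // IH.
Qed.

Lemma Kset e : e != 0 -> gg e = 0 -> forall a, gg a = 0 -> a = 0 \/ a = e.
Proof.
move=> ne0 ge a ga.
have sub : [set 0; e] \subset [set a | gg a == 0].
  by apply/subsetP => z; rewrite !inE => /orP [] /eqP ->; rewrite ?g0 ?ge.
have : [set 0; e] = [set a | gg a == 0].
  by apply/eqP; rewrite eqEcard sub (K2 hS) cards2 eq_sym ne0.
by move/setP/(_ a); rewrite !inE ga eqxx => /orP [] /eqP; auto.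
Qed.


Lemma xpar (x : BT) (j : 'Z_4) : x \notin F -> x + x \in F ->
  (x *+ j \in F) = ~~ odd j.
Proof.
move=> xF uF; case: j => [[|[|[|[|?]]]] ?] //=.
- by rewrite mulr0n (F0 hS).
- by rewrite mulr1n (negbTE xF).
- by rewrite mulrSr mulr2n (negbTE (notF_add uF xF)).
Qed.

Lemma caseB (e x u : BT) : e \in F -> x \notin F -> x + x = u -> u \in F -> e != 0 ->
  gg e = 0 -> gg x = u -> gg u = e ->
  (forall y, y \in F -> [\/ y = 0, y = e, y = u | y = e + u]) ->
  (forall y, y \notin F -> y - x \in F) ->
  brace_isomorphic B add3 circ3.
Proof.
move=> eF xF hu uF ne0 ge gx gu hF hO.
have e2 : e *+ 2 = 0 by rewrite mulr2n (F2 eF).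
have x4 : x *+ 4 = 0.
  by rewrite -[4%N]/(2 * 2)%N mulrnA [x *+ 2]mulr2n hu mulr2n (F2 uF).
have emod k : e *+ (k %% 2) = e *+ k by apply: mulrn_mod.
have xmod k : x *+ (k %% 4) = x *+ k by apply: mulrn_mod.
have psiD (a1 a2 : 'Z_2) (b1 b2 : 'Z_4) :
    e *+ ((a1 + a2)%R : 'Z_2) + x *+ ((b1 + b2)%R : 'Z_4) = (e *+ a1 + x *+ b1) + (e *+ a2 + x *+ b2).
  by rewrite add2v add4v emod xmod !mulrnDr addrACA.
have uF' : x + x \in F by rewrite hu.
have psiF (i : 'Z_2) (j : 'Z_4) : (e *+ i + x *+ j \in F) = ~~ odd j.
  case: (boolP (odd j)) => oj /=.
    by apply/negbTE/notF_add; [exact: memF_mulrn | rewrite xpar // oj].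
  by apply: (FD hS); [exact: memF_mulrn | rewrite xpar].
have gpsi (i : 'Z_2) (j : 'Z_4) :
    gg (e *+ i + x *+ j) = e *+ eps3 j + x *+ ((2%:R * j)%R : 'Z_4).
  rewrite addrC gD ?memF_mulrn // (gmulF i eF) ge mul0rn addr0.
  case: (tabg' j) => -> ->; case: j => [[|[|[|[|?]]]] ?] //=.
  - by rewrite !mulr0n g0 addr0.
  - by rewrite mulr1n gx mulr0n add0r mulr2n hu.
  - by rewrite mulr2n hu gu mulr1n mulr0n addr0.
  - by rewrite [x *+ 3]mulrS [x *+ 2]mulr2n hu gD // gx gu mulr1n addrC.
pose psi (p : 'Z_2 * 'Z_4) : BT := e *+ p.1 + x *+ p.2.
have ker (i : 'Z_2) (j : 'Z_4) : e *+ i + x *+ j = 0 -> i = 0 /\ j = 0.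
  move=> h; have := psiF i j; rewrite h (F0 hS).
  case: i h => [[|[|?]] ?] //; case: j => [[|[|[|[|?]]]] ?] //= h _;
    try by split; apply/eqP.
  - by move: ne0; rewrite -gu -hu -mulr2n -[x *+ 2]add0r -(mulr0n e) h g0 eqxx.
  - by move: ne0; rewrite -h mulr1n mulr0n addr0 eqxx.
  - move: ne0; have : gg (e *+ 1 + x *+ 2) = e by rewrite mulr1n mulr2n hu addrC gD // gu ge addr0.
    by rewrite h g0 => <-; rewrite eqxx.
apply: (@iso_of _ _ _ psi).
- case=> [i1 j1] [i2 j2]; rewrite /psi /= => h.
  have : e *+ ((i1 - i2)%R : 'Z_2) + x *+ ((j1 - j2)%R : 'Z_4) = 0.
    by apply: (addIr (e *+ i2 + x *+ j2)); rewrite -psiD !subrK add0r.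
  by case/ker => /eqP; rewrite subr_eq0 => /eqP -> /eqP; rewrite subr_eq0 => /eqP ->.
- move=> y; case: (boolP (y \in F)) => yF.
    case: (hF y yF) => ->.
    + by exists (@Ordinal 2 0 isT, @Ordinal 4 0 isT); rewrite /psi /= mulr0n addr0.
    + by exists (@Ordinal 2 1 isT, @Ordinal 4 0 isT); rewrite /psi /= mulr1n mulr0n addr0.
    + by exists (@Ordinal 2 0 isT, @Ordinal 4 2 isT); rewrite /psi /= mulr0n add0r mulr2n.
    + by exists (@Ordinal 2 1 isT, @Ordinal 4 2 isT); rewrite /psi /= mulr1n mulr2n hu.
  have -> : y = (y - x) + x by rewrite subrK.
  case: (hF _ (hO y yF)) => ->.
  + by exists (@Ordinal 2 0 isT, @Ordinal 4 1 isT); rewrite /psi /= mulr0n !add0r mulr1n.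
  + by exists (@Ordinal 2 1 isT, @Ordinal 4 1 isT); rewrite /psi /= mulr1n.
  + exists (@Ordinal 2 0 isT, @Ordinal 4 3 isT); rewrite /psi /= mulr0n add0r.
    by rewrite mulrSr mulr2n hu.
  + exists (@Ordinal 2 1 isT, @Ordinal 4 3 isT); rewrite /psi /= mulr1n.
    by rewrite mulrSr mulr2n hu addrA.
- by case=> [i1 j1] [i2 j2]; rewrite /psi /add3 /= psiD.
- case=> [i1 j1] [i2 j2].
  change (e *+ ((i1 + i2 + eps3 j1 * red42 j2)%R : 'Z_2) + x *+ ((j1 + j2 + 2%:R * j1 * j2)%R : 'Z_4)
    = e *+ i1 + x *+ j1 + lam (e *+ i1 + x *+ j1) (e *+ i2 + x *+ j2)).
  rewrite !psiD.
  case: (tab3 j1 j2) => -> ->.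
  case: (boolP (odd j2)) => oj.
    rewrite lamO; last by rewrite psiF oj.
    by rewrite gpsi -!addrA.
  rewrite (lamF hS); last by rewrite psiF oj.
  by rewrite !mulr0n !addr0.
Qed.

Lemma ac5 (a b c d f : BT) : a + b + c + (d + f) = a + d + (b + f + c).
Proof. by rewrite -!addrA; congr (_ + _); rewrite [RHS]addrCA; congr (_ + _); rewrite [LHS]addrCA (addrC c f). Qed.
Lemma caseA1 (x e : BT) : x \notin F -> x + x = e -> e \in F -> e != 0 ->
  (forall f, f \in F -> f = 0 \/ f = e) -> (forall y, y \notin F -> y - x \in F) ->
  (forall f, f \in F -> gg f = 0) -> (forall y, y \notin F -> gg y = e) ->
  brace_isomorphic B add1 circ1.
Proof.
move=> xF hx eF ne0 Fe hO allz gO.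
have e2 : e + e = 0 by rewrite (F2 eF).
have x4 : x *+ 4 = 0.
  by rewrite -[4%N]/(2 * 2)%N mulrnA [x *+ 2]mulr2n hx mulr2n e2.
have xmod k : x *+ (k %% 4) = x *+ k by apply: mulrn_mod.
have uF : x + x \in F by rewrite hx.
have pD (a b : 'Z_4) : x *+ ((a + b)%R : 'Z_4) = x *+ a + x *+ b.
  by rewrite add4v xmod mulrnDr.
have gp (j : 'Z_4) : gg (x *+ j) = if odd j then e else 0.
  by case: (boolP (odd j)) => oj; [apply: gO | apply: allz]; rewrite xpar // oj.
have ker (j : 'Z_4) : x *+ j = 0 -> j = 0.
  move=> h; have := xpar j xF uF; rewrite h (F0 hS).
  case: j h => [[|[|[|[|?]]]] ?] //= h _; try by apply/eqP.
  by move: ne0; rewrite -hx -mulr2n h eqxx.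
apply: (@iso_of _ _ _ (fun j : 'Z_4 => x *+ j)).
- move=> p q /= h.
  have : x *+ ((p - q)%R : 'Z_4) = 0.
    by apply: (addIr (x *+ q)); rewrite -pD subrK add0r.
  by move/ker/eqP; rewrite subr_eq0 => /eqP.
- move=> y; case: (boolP (y \in F)) => yF.
    case: (Fe y yF) => ->.
    + by exists (@Ordinal 4 0 isT); rewrite /= mulr0n.
    + by exists (@Ordinal 4 2 isT); rewrite /= mulr2n.
  have -> : y = (y - x) + x by rewrite subrK.
  case: (Fe _ (hO y yF)) => ->.
  + by exists (@Ordinal 4 1 isT); rewrite /= add0r mulr1n.
  + by exists (@Ordinal 4 3 isT); rewrite /= mulrSr mulr2n hx.
- by move=> p q; exact: pD.
- move=> p q.
  change (x *+ ((p + q + 2%:R * p * q)%R : 'Z_4) = x *+ p + lam (x *+ p) (x *+ q)).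
  rewrite !pD tab1.
  case oq: (odd q).
    rewrite lamO; last by rewrite xpar // oq.
    rewrite gp andTb; case: (odd p).
      by rewrite mulr2n hx addrA.
    by rewrite mulr0n !addr0.
  by rewrite (lamF hS) ?xpar ?oq // mulr0n !addr0.
Qed.

Lemma caseA2 (x e : BT) : x \notin F -> x + x = 0 -> e \in F -> e != 0 ->
  (forall f, f \in F -> f = 0 \/ f = e) -> (forall y, y \notin F -> y - x \in F) ->
  (forall f, f \in F -> gg f = 0) -> (forall y, y \notin F -> gg y = e) ->
  brace_isomorphic B add2 circ2.
Proof.
move=> xF hx eF ne0 Fe hO allz gO.
have e2 : e *+ 2 = 0 by rewrite mulr2n (F2 eF).
have x2 : x *+ 2 = 0 by rewrite mulr2n hx.
have emod k : e *+ (k %% 2) = e *+ k by apply: mulrn_mod.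
have xmod k : x *+ (k %% 2) = x *+ k by apply: mulrn_mod.
have pD1 (a b : 'Z_2) : e *+ ((a + b)%R : 'Z_2) = e *+ a + e *+ b.
  by rewrite add2v emod mulrnDr.
have pD2 (a b : 'Z_2) : x *+ ((a + b)%R : 'Z_2) = x *+ a + x *+ b.
  by rewrite add2v xmod mulrnDr.
have pD (a1 a2 b1 b2 : 'Z_2) : e *+ ((a1 + a2)%R : 'Z_2) + x *+ ((b1 + b2)%R : 'Z_2)
    = (e *+ a1 + x *+ b1) + (e *+ a2 + x *+ b2).
  by rewrite pD1 pD2 addrACA.
have xpar2 (j : 'Z_2) : (x *+ j \in F) = ~~ odd j.
  case: j => [[|[|?]] ?] //=; first by rewrite mulr0n (F0 hS).
  by rewrite mulr1n (negbTE xF).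
have psiF (i j : 'Z_2) : (e *+ i + x *+ j \in F) = ~~ odd j.
  case: (boolP (odd j)) => oj /=.
    by apply/negbTE/notF_add; [exact: memF_mulrn | rewrite xpar2 oj].
  by apply: (FD hS); [exact: memF_mulrn | rewrite xpar2].
have gpsi (i j : 'Z_2) : gg (e *+ i + x *+ j) = e *+ j.
  have := psiF i j; case: j => [[|[|?]] ?] //= h.
    by rewrite mulr0n allz // h.
  by rewrite mulr1n gO // h.
have ker (i j : 'Z_2) : e *+ i + x *+ j = 0 -> i = 0 /\ j = 0.
  move=> h; have := psiF i j; rewrite h (F0 hS).
  case: i h => [[|[|?]] ?] //; case: j => [[|[|?]] ?] //= h _;
    try by split; apply/eqP.
  by move: ne0; rewrite -h mulr1n mulr0n addr0 eqxx.
apply: (@iso_of _ _ _ (fun p : 'Z_2 * 'Z_2 => e *+ p.1 + x *+ p.2)).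
- case=> [i1 j1] [i2 j2] /= h.
  have : e *+ ((i1 - i2)%R : 'Z_2) + x *+ ((j1 - j2)%R : 'Z_2) = 0.
    by apply: (addIr (e *+ i2 + x *+ j2)); rewrite -pD !subrK add0r.
  by case/ker => /eqP; rewrite subr_eq0 => /eqP -> /eqP; rewrite subr_eq0 => /eqP ->.
- move=> y; case: (boolP (y \in F)) => yF.
    case: (Fe y yF) => ->.
    + by exists (@Ordinal 2 0 isT, @Ordinal 2 0 isT); rewrite /= mulr0n addr0.
    + by exists (@Ordinal 2 1 isT, @Ordinal 2 0 isT); rewrite /= mulr1n mulr0n addr0.
  have -> : y = (y - x) + x by rewrite subrK.
  case: (Fe _ (hO y yF)) => ->.
  + by exists (@Ordinal 2 0 isT, @Ordinal 2 1 isT); rewrite /= mulr0n !add0r mulr1n.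
  + by exists (@Ordinal 2 1 isT, @Ordinal 2 1 isT); rewrite /= mulr1n.
- by case=> [i1 j1] [i2 j2]; exact: pD.
- case=> [i1 j1] [i2 j2].
  change (e *+ ((i1 + i2 + j1 * j2)%R : 'Z_2) + x *+ ((j1 + j2)%R : 'Z_2)
    = e *+ i1 + x *+ j1 + lam (e *+ i1 + x *+ j1) (e *+ i2 + x *+ j2)).
  rewrite !pD1 pD2 tab2.
  case: (boolP (odd j2)) => oj.
    rewrite lamO; last by rewrite psiF oj.
    by rewrite gpsi ac5.
  by rewrite (lamF hS); [rewrite mulr0n addr0 addrACA | rewrite psiF oj].
Qed.

Lemma classify : [\/ brace_isomorphic B add1 circ1, brace_isomorphic B add2 circ2
    | brace_isomorphic B add3 circ3].
Proof.
have [a0 ha0] := gnz hS.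
have gF' := gF hS; have Fx := Fx0 hS; have xF := x0F hS; have uF := x02 hS.
case: (boolP [forall f : BT, (f \in F) ==> (gg f == 0)]) => [/forallP allz|].
- have allz' f : f \in F -> gg f = 0.
    by move=> hf; apply/eqP; exact: (implyP (allz f) hf).
  have eF : gg a0 \in F := gF' a0.
  have ge : gg (gg a0) = 0 := allz' _ eF.
  have Fe f : f \in F -> f = 0 \/ f = gg a0 := fun hf => Kset ha0 ge (allz' f hf).
  have gx0 : gg x0 = gg a0.
    case: (Fe _ (gF' x0)) => // h0; exfalso; move/eqP: ha0; apply.
    case: (boolP (a0 \in F)) => ha; first exact: allz'.
    by rewrite -(subrK x0 a0) addrC gD ?Fx // h0 (allz' (a0 - x0)) ?Fx // addr0.
  have gO y : y \notin F -> gg y = gg a0.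
    by move=> hy; rewrite -(subrK x0 y) addrC gD ?Fx // gx0 (allz' (y - x0)) ?Fx // addr0.
  have hO y : y \notin F -> y - x0 \in F by apply: Fx.
  case: (Fe _ uF) => hx.
  + by constructor 2; apply: (caseA2 xF hx eF ha0 Fe hO allz' gO).
  + by constructor 1; apply: (caseA1 xF hx eF ha0 Fe hO allz' gO).
- rewrite negb_forall => /existsP [f1]; rewrite negb_imply => /andP [f1F gf1].
  set e := gg f1 in gf1 *.
  have eF : e \in F := gF' f1.
  have ge : gg e = 0 := ggF f1F.
  have Ke a : gg a = 0 -> a = 0 \/ a = e := fun h => Kset gf1 ge h.
  have gFe f : f \in F -> gg f = 0 \/ gg f = e by move=> hf; apply: Ke; apply: ggF.
  have e2 : e + e = 0 := F2 eF.
  have oe : - e = e by apply/eqP; rewrite eq_sym -addr_eq0 e2.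
  have v0 : gg x0 != 0 /\ gg x0 != e.
    have H : (forall y, gg y = 0 \/ gg y = e) -> False.
      move=> hall; have [a ha] := gsurj hS f1F.
      have : f1 = 0 \/ f1 = e by rewrite -ha; apply: hall.
      by case=> hf; move: gf1; rewrite /e hf ?g0 ?ge eqxx.
    have hall : (gg x0 = 0 \/ gg x0 = e) -> forall y, gg y = 0 \/ gg y = e.
      move=> hv y; case: (boolP (y \in F)) => hy; first exact: gFe.
      rewrite -(subrK x0 y) addrC gD ?Fx //.
      by case: hv => ->; case: (gFe _ (Fx _ hy)) => ->; rewrite ?addr0 ?add0r ?e2; auto.
    by split; apply/eqP => h; apply: H; apply: hall; [left|right].
  case: v0 => v0 ve.
  have vF := gF' x0.
  have gv : gg (gg x0) = e.
    case: (gFe _ vF) => // h; case: (Ke _ h) => h'; by [move: v0; rewrite h' eqxx | move: ve; rewrite h' eqxx].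
  have g2x : gg (x0 + x0) = e.
    have h := gM x0 x0.
    rewrite circK (lamO _ xF) addrA (gD _ vF) gv (F2 vF) in h.
    by move/eqP: h; rewrite addr_eq0 oe => /eqP.
  have u2 := F2 uF.
  have Fall f : f \in F -> [\/ f = 0, f = e, f = x0 + x0 | f = e + (x0 + x0)].
    move=> hf; case: (gFe f hf) => h.
      by case: (Ke f h) => ->; [constructor 1 | constructor 2].
    have : gg (f + (x0 + x0)) = 0 by rewrite gD // h g2x e2.
    case/Ke => h2.
      by constructor 3; rewrite -[f]addr0 -u2 addrA h2 add0r.
    by constructor 4; rewrite -[f]addr0 -u2 addrA h2.
  have hv : gg x0 = x0 + x0 \/ gg x0 = e + (x0 + x0).
    case: (Fall _ vF) => h; [by move: v0; rewrite h eqxx | by move: ve; rewrite h eqxx | by left | by right].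
  constructor 3; case: hv => hv.
    exact: (caseB eF xF erefl uF gf1 ge hv g2x Fall Fx).
  have xF' : x0 + (x0 + x0) \notin F by rewrite addrC notF_add.
  have hx : x0 + (x0 + x0) + (x0 + (x0 + x0)) = x0 + x0 by rewrite addrACA u2 addr0.
  have gx : gg (x0 + (x0 + x0)) = x0 + x0 by rewrite gD // hv g2x addrAC e2 add0r.
  apply: (caseB eF xF' hx uF gf1 ge gx g2x Fall) => y hy.
  by rewrite opprD addrA (FD hS) ?Fx ?(FN hS).
Qed.

End Cls.
End S.

Local Close Scope ring_scope.

Theorem mainTheorem15 (T : finType) (B : skew_brace T) :
  additively_abelian B ->
  #|Lambda_vertices B| = 1%N ->
  [\/ brace_isomorphic B add1 circ1,
      brace_isomorphic B add2 circ2
    | brace_isomorphic B add3 circ3].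
Proof.
move=> ab hV; have [F [x0 hS]] := structure ab hV.
exact: (classify hS).
Qed.
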